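(* Let $d$ be an extended $K$-quasi-metric on $X$ with point at infinity $\infty$, let $o\in X\setminus\{\infty\}$ and let $d'=d_o$ be the involution of $d$ at $o$. Fix $\epsilon>0$. Then for every $\delta<\epsilon/K^2$ and every $\delta$-covering $\{B_{d,r_i}(x_i)\}_i$ of $X\setminus\{\infty\}$, some subfamily of $\{B_{d',K^3r_i/\epsilon^2}(x_i)\}_i$ is a $\frac{K^3}{\epsilon^2}\delta$-covering of $X\setminus(\{\infty\}\cup B_{d,\epsilon}(o))$.
   Context: A $K$-quasi-metric ($K\ge1$) is a symmetric map $d:X\times X\to[0,\infty)$ with $d(x,y)=0\iff x=y$ and $d(x,y)\le K\max(d(x,z),d(z,y))$; it is extended with point at infinity $\infty\in X$ if $d(x,\infty)=\infty$ for $x\neq\infty$ and all other distances are finite (with the same axioms). The involution at $o\ne\infty$: $d_o(x,x)=0$, $d_o(x,y)=\frac{d(x,y)}{d(x,o)d(o,y)}$ for distinct $x,y\ne\infty$, $d_o(\infty,y)=1/d(o,y)$, $d_o(x,\infty)=1/d(x,o)$ for distinct points, with $\lambda/0=\infty$ for $\lambda>0$. For a distance $\rho$ on $X$, $B_{\rho,r}(x)=\{y\in X:\rho(x,y)\le r\}$ is the closed ball. A $\delta$-covering of a set $A$ with respect to $\rho$ is a family of closed $\rho$-balls $B_{\rho,r_i}(x_i)$ with $r_i\le\delta$ whose union contains $A$. *)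

(* Defs.v *)
From mathcomp Require Import all_boot all_order all_algebra.
From mathcomp Require Import all_classical all_reals.
From mathcomp Require Import ereal.
Set Implicit Arguments. Unset Strict Implicit. Unset Printing Implicit Defensive.
Import Order.TTheory GRing.Theory Num.Theory.
Local Open Scope classical_set_scope.
Local Open Scope ring_scope.

Definition ext_quasi_metric (R : realType) (X : Type) (K : R)
  (d : X -> X -> \bar R) (inf : X) : Prop :=
  1 <= K /\
  (forall x y, d x y = d y x) /\
  (forall x y, (0 <= d x y)%E) /\
  (forall x y, d x y = 0%E <-> x = y) /\
  (forall x y z, (d x y <= K%:E * maxe (d x z) (d z y))%E) /\
  (forall x, x <> inf -> d x inf = +oo%E) /\
  (forall x y, x <> inf -> y <> inf -> d x y \is a fin_num).

Definition ediv0 (R : realType) (lam t : R) : \bar R :=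
  if t == 0 then +oo%E else (lam / t)%:E.

Definition involution (R : realType) (X : Type) (d : X -> X -> \bar R)
  (inf o : X) (x y : X) : \bar R :=
  if pselect (x = y) then 0%E
  else if pselect (x = inf) then ediv0 1 (fine (d o y))
  else if pselect (y = inf) then ediv0 1 (fine (d x o))
  else ediv0 (fine (d x y)) (fine (d x o) * fine (d o y)).

Definition cball (R : realType) (X : Type) (rho : X -> X -> \bar R)
  (r : R) (x : X) : set X := [set y | (rho x y <= r%:E)%E].

Definition is_covering (R : realType) (X I : Type) (rho : X -> X -> \bar R)
  (delta : R) (J : set I) (c : I -> X) (r : I -> R) (A : set X) : Prop :=
  (forall i, J i -> r i <= delta) /\
  A `<=` \bigcup_(i in J) cball rho (r i) (c i).

(* Main.v *)
Require Import Defs.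
From mathcomp Require Import all_boot all_order all_algebra.
From mathcomp Require Import all_classical all_reals.
From mathcomp Require Import ereal.
From mathcomp Require Import lra.
Import Order.TTheory GRing.Theory Num.Theory.
Local Open Scope classical_set_scope.
Local Open Scope ring_scope.

Lemma real_part (R : realType) (K eps delta r a b e : R) :
  1 <= K -> 0 < eps -> delta < eps / K ^+ 2 -> r <= delta ->
  0 <= a -> a <= r -> eps < e -> e <= K * Num.max b a ->
  0 < b * e /\ a / (b * e) <= K ^+ 3 * r / eps ^+ 2.
Proof.
move=> K1 e0 hd hr a0 ar he hm.
have K0 : 0 < K by lra.
have hd' : delta * K ^+ 2 < eps by rewrite -ltr_pdivlMr // exprn_gt0.
have hb : e <= K * b.
  have [hba|hba] := leP b a.
    rewrite max_r // in hm.
    exfalso.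
    have : K * a <= K * delta by rewrite ler_pM2l //; lra.
    have d0 : 0 <= delta by lra.
    have : K * delta <= delta * K ^+ 2 by rewrite expr2; nra.
    lra.
  by rewrite max_l // ?ltW in hm.
have b0 : 0 < b.
  have : 0 < K * b by lra.
  by rewrite pmulr_rgt0.
have be0 : 0 < b * e by apply: mulr_gt0 => //; lra.
split => //.
rewrite ler_pdivrMr // mulrAC ler_pdivlMr ?exprn_gt0 //.
have r0 : 0 <= r by lra.
have h1 : eps ^+ 2 <= K * (b * e).
  rewrite expr2 mulrA.
  apply: (@le_trans _ _ (e * e)); first by apply: ler_pM; lra.
  by apply: ler_wpM2r; lra.
have h2 : a * eps ^+ 2 <= r * (K * (b * e)).
  apply: ler_pM => //; by rewrite exprn_ge0 // ltW.
have h3 : K <= K ^+ 3.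
  rewrite exprS -[X in X <= _]mulr1 ler_pM2l //.
  by rewrite expr_ge1 // ltW.
apply: (le_trans h2).
have rp : 0 <= r * (b * e) by apply: mulr_ge0 => //; exact: ltW.
rewrite [r * _]mulrCA -[K ^+ 3 * r * _]mulrA.
by rewrite ler_wpM2r.
Qed.

Theorem lemma2p2 (R : realType) (X : Type) (K : R) (d : X -> X -> \bar R)
  (inf o : X) (eps : R) :
  ext_quasi_metric K d inf -> o <> inf -> 0 < eps ->
  forall (delta : R), delta < eps / K ^+ 2 ->
  forall (I : Type) (c : I -> X) (r : I -> R),
    is_covering d delta setT c r (~` [set inf]) ->
    exists J : set I,
      is_covering (involution d inf o) (K ^+ 3 / eps ^+ 2 * delta) J c
        (fun i => K ^+ 3 * r i / eps ^+ 2)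
        (~` ([set inf] `|` cball d eps o)).
Proof.
move=> [K1 [dsym [dge0 [d0 [dtri [dinf dfin]]]]]] oinf e0 delta hd I c r [hr hcov].
have K0 : 0 < K by apply: lt_le_trans K1.
have q0 : 0 <= K ^+ 3 / eps ^+ 2.
  by apply: divr_ge0; rewrite exprn_ge0 // ltW.
exists setT; split.
  move=> i _; rewrite mulrAC ler_wpM2l //; exact: hr.
move=> x /= hx.
have xinf : x <> inf by move=> xi; apply: hx; left.
have hxo : ~ (d o x <= eps%:E)%E by move=> h; apply: hx; right.
have [i _ hi] := hcov x xinf.
exists i => //.
rewrite /cball /involution /=.
have ri0 : 0 <= r i by rewrite -lee_fin; apply: le_trans hi.
case: pselect => [ex|cx] /=. by rewrite lee_fin mulrAC mulr_ge0.
have ci : c i <> inf.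
  move=> ciE; move: hi; rewrite /cball /= ciE dsym dinf //.
case: pselect => [h|_] /=; first by case: ci.
case: pselect => [h|_] /=; first by case: xinf.
have fcx := dfin _ _ ci xinf.
have fco := dfin _ _ ci oinf.
have fox := dfin _ _ oinf xinf.
have hm := dtri o x (c i).
rewrite [d o (c i)]dsym in hm.
move: hi hxo hm; rewrite /cball /=.
rewrite -(fineK fcx) -(fineK fco) -(fineK fox) -EFin_max -EFinM !lee_fin.
move=> hi hxo hm.
have a0 : 0 <= fine (d (c i) x) by rewrite -lee_fin fineK.
have he : eps < fine (d o x) by rewrite ltNge; apply/negP.
have [be0 hle] := @real_part R _ _ _ _ _ _ _ K1 e0 hd (hr i Logic.I) a0 hi he hm.
rewrite /ediv0 gt_eqF // lee_fin.
Qed.
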